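(* Let $(\mathcal M,\mathrm d_{\mathcal M})$ be a metric space with finite doubling constant $\lambda$ and doubling dimension $d_{\mathcal M}=\log_2\lambda$. There is a constant $c>0$ depending only on $\lambda$ such that the following holds. Let $\alpha\ge 2$, $\epsilon\in(0,1)$, $k,m\ge1$, let $X\in\mathcal M^m$, and let $X_k\in\mathcal M^k$ be an $\alpha$-approximate $k$-simplification of $X$. Then there exists a finite set $\mathcal C\subset\mathcal M^k$ with \[ |\mathcal C|\le\Big(c\,k\,\log_2\!\big(\tfrac{\alpha}{\epsilon}\big)\big(\tfrac{\alpha}{\epsilon}\big)^{d_{\mathcal M}}\Big)^k \] such that for every $q\in\mathcal M^k$ with $\epsilon\,\mathrm d_{dF}(X,X_k)\le\mathrm d_{dF}(q,X)\le\frac1\epsilon\,\mathrm d_{dF}(X,X_k)$ there is $\bar X\in\mathcal C$ with $\mathrm d_{dF}(q,\bar X)\le\epsilon\,\mathrm d_{dF}(q,X)$.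
   Context: A curve of complexity $m$ in a metric space $(\mathcal M,\mathrm d_{\mathcal M})$ is a sequence $p=p_1,\dots,p_m$ of points of $\mathcal M$; $\mathcal M^m$ denotes the set of such curves. For $p\in\mathcal M^m$ and $q\in\mathcal M^k$, a traversal of $p$ and $q$ is a sequence of index pairs $(i_1,j_1),\dots,(i_t,j_t)$ with $(i_1,j_1)=(1,1)$, $(i_t,j_t)=(m,k)$, and for every $u<t$: $i_{u+1}-i_u\in\{0,1\}$, $j_{u+1}-j_u\in\{0,1\}$ and $(i_{u+1}-i_u)+(j_{u+1}-j_u)\ge 1$. Its cost is $\max_u \mathrm d_{\mathcal M}(p_{i_u},q_{j_u})$. The discrete Fréchet distance $\mathrm d_{dF}(p,q)$ is the minimum cost over all traversals of $p$ and $q$. For $p\in\mathcal M^m$ and $\alpha\ge 1$, a curve $p'\in\mathcal M^k$ is an $\alpha$-approximate $k$-simplification of $p$ if $\mathrm d_{dF}(p,p')\le\alpha\,\mathrm d_{dF}(p,q)$ for every $q\in\mathcal M^k$. The doubling constant $\lambda$ of $\mathcal M$ is the smallest integer such that every closed ball of radius $r>0$ can be covered by at most $\lambda$ closed balls of radius $r/2$ centered at points of $\mathcal M$. *)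

(* Defs.v *)
From Stdlib Require Import Reals List ClassicalEpsilon.
Import ListNotations.
Open Scope R_scope.

Record MetricSpace := {
  pt :> Type;
  dist : pt -> pt -> R;
  dist_refl : forall x, dist x x = 0;
  dist_sep : forall x y, dist x y = 0 -> x = y;
  dist_sym : forall x y, dist x y = dist y x;
  dist_tri : forall x y z, dist x z <= dist x y + dist y z
}.

(* A curve of complexity m in M is a list of points of length m.
   Indices are 0-based: p_1 ... p_m of the paper are nth 0 ... nth (m-1). *)

Definition trav_step (a b : nat * nat) : Prop :=
  let (i, j) := a in let (i', j') := b in
  (i' = i \/ i' = S i) /\ (j' = j \/ j' = S j) /\ (i, j) <> (i', j').

Definition is_traversal (m k : nat) (t : list (nat * nat)) : Prop :=
  t <> [] /\
  nth 0 t (0%nat, 0%nat) = (0%nat, 0%nat) /\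
  nth (length t - 1) t (0%nat, 0%nat) = ((m - 1)%nat, (k - 1)%nat) /\
  (forall u, (S u < length t)%nat ->
     trav_step (nth u t (0%nat, 0%nat)) (nth (S u) t (0%nat, 0%nat))).

(* Distance between p_i and q_j (indices are always in range for traversals). *)
Definition pair_dist {M : MetricSpace} (p q : list M) (ij : nat * nat) : R :=
  match nth_error p (fst ij), nth_error q (snd ij) with
  | Some x, Some y => dist M x y
  | _, _ => 0
  end.

Definition trav_cost {M : MetricSpace} (p q : list M) (t : list (nat * nat)) : R :=
  fold_right Rmax 0 (map (pair_dist p q) t).

Definition is_dF {M : MetricSpace} (p q : list M) (r : R) : Prop :=
  (exists t, is_traversal (length p) (length q) t /\ trav_cost p q t = r) /\
  (forall t, is_traversal (length p) (length q) t -> r <= trav_cost p q t).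

(* Discrete Frechet distance (the minimum exists for nonempty curves). *)
Definition dF {M : MetricSpace} (p q : list M) : R :=
  epsilon (inhabits 0) (fun r => is_dF p q r).

Definition approx_simplification {M : MetricSpace} (alpha : R) (k : nat)
    (p p' : list M) : Prop :=
  length p' = k /\
  forall q : list M, length q = k -> dF p p' <= alpha * dF p q.

Definition doubling_cover (M : MetricSpace) (n : nat) : Prop :=
  forall (x : M) (r : R), 0 < r ->
    exists centers : list M, (length centers <= n)%nat /\
      forall y : M, dist M x y <= r ->
        exists c, In c centers /\ dist M c y <= r / 2.

Definition doubling_constant (M : MetricSpace) (lam : nat) : Prop :=
  doubling_cover M lam /\ forall n, doubling_cover M n -> (lam <= n)%nat.

Definition log2 (x : R) : R := ln x / ln 2.

(* Main.v *)
Require Import Defs.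
From Stdlib Require Import Reals List.
From Stdlib Require Import ZArith Lra Lia Classical ClassicalEpsilon.
Import ListNotations.
Open Scope R_scope.

Notation d0 := (0%nat, 0%nat).

Lemma exp_le' x y : x <= y -> exp x <= exp y.
Proof. intros H. destruct (Rle_lt_or_eq_dec _ _ H). left; apply exp_increasing; auto. subst; lra. Qed.

Lemma ln_le' x y : 0 < x -> x <= y -> ln x <= ln y.
Proof. intros H0 H. destruct (Rle_lt_or_eq_dec _ _ H). left; apply ln_increasing; auto. subst; lra. Qed.

Lemma div_le a b p : 0 < p -> a <= b * p -> a / p <= b.
Proof. intros Hp H. unfold Rdiv. apply Rmult_le_reg_r with p; auto.
  rewrite Rmult_assoc, Rinv_l by lra. lra. Qed.

Lemma fold_Rmax_nonneg (l : list R) : 0 <= fold_right Rmax 0 l.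
Proof. induction l; simpl. lra. eapply Rle_trans; [exact IHl| apply Rmax_r]. Qed.

Lemma fold_Rmax_ge (l : list R) x : In x l -> x <= fold_right Rmax 0 l.
Proof. induction l; simpl; intros H; [contradiction|]. destruct H as [<-|H]. apply Rmax_l.
  eapply Rle_trans; [apply IHl; exact H| apply Rmax_r]. Qed.

Lemma fold_Rmax_le (l : list R) B : 0 <= B -> (forall x, In x l -> x <= B) -> fold_right Rmax 0 l <= B.
Proof. induction l; simpl; intros HB H. lra. apply Rmax_lub. apply H; auto. apply IHl; auto. Qed.

Lemma fold_Rmax_in (l : list R) (V : list R) : In 0 V -> (forall x, In x l -> In x V) -> In (fold_right Rmax 0 l) V.
Proof. induction l; simpl; intros H0 H. auto. apply Rmax_case; [apply H; auto| apply IHl; auto]. Qed.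

Lemma trav_snoc m k t a b : is_traversal m k t -> trav_step ((m-1)%nat,(k-1)%nat) (a,b) ->
  is_traversal (S a) (S b) (t ++ [(a,b)]).
Proof.
  intros [Hne [H0 [Hl Hs]]] Hst.
  assert (Hlt : (0 < length t)%nat) by (destruct t; [congruence|simpl; lia]).
  split; [|split; [|split]].
  - destruct t; simpl; congruence.
  - rewrite app_nth1 by lia. exact H0.
  - rewrite length_app. simpl. replace (length t + 1 - 1)%nat with (length t) by lia.
    rewrite nth_middle. f_equal; lia.
  - intros u Hu. rewrite length_app in Hu; simpl in Hu.
    destruct (Nat.lt_ge_cases (S u) (length t)).
    + rewrite !app_nth1 by lia. apply Hs; lia.
    + assert (u = length t - 1)%nat by lia. subst u.
      rewrite app_nth1 by lia. rewrite Hl.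
      replace (S (length t - 1)) with (length t) by lia. rewrite nth_middle. exact Hst.
Qed.

Lemma trav_base : is_traversal 1 1 [(0%nat,0%nat)].
Proof. split; [discriminate|]. split; [reflexivity|]. split; [reflexivity|].
  intros u Hu; simpl in Hu; lia. Qed.

Lemma trav_exists a b : exists t, is_traversal (S a) (S b) t.
Proof.
  assert (H1 : forall b, exists t, is_traversal 1 (S b) t).
  { induction b0 as [|b0 [t Ht]]. exists [(0%nat,0%nat)]; apply trav_base.
    exists (t ++ [(0%nat, S b0)]). apply (trav_snoc 1 (S b0)); auto.
    simpl. try rewrite Nat.sub_0_r.
    split; [left; reflexivity|split; [right; reflexivity| intro H; injection H; lia]]. }
  induction a as [|a [t Ht]]. apply H1.
  exists (t ++ [(S a, b)]). apply (trav_snoc (S a) (S b)); auto.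
  simpl. try rewrite !Nat.sub_0_r.
  split; [right; reflexivity|split;[left; reflexivity| intro H; injection H; lia]].
Qed.

Lemma trav_diag n : is_traversal (S n) (S n) (map (fun i => (i,i)) (seq 0 (S n))).
Proof.
  induction n. simpl. apply trav_base.
  rewrite seq_S, map_app. simpl (map _ [_]).
  apply (trav_snoc (S n) (S n)); auto.
  simpl. try rewrite Nat.sub_0_r.
  split; [right; reflexivity|split;[right;reflexivity| intro H; injection H; lia]].
Qed.

Lemma trav_fst_reach m k t : is_traversal m k t ->
  forall u, (u < length t)%nat -> forall i, (i <= fst (nth u t d0))%nat ->
  exists u', (u' <= u)%nat /\ fst (nth u' t d0) = i.
Proof.
  intros [Hne [H0 [Hl Hs]]]. induction u; intros Hu i Hi.
  - exists 0%nat. split; [lia|]. rewrite H0 in Hi |- *. simpl in *. lia.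
  - specialize (Hs u Hu).
    destruct (Nat.le_gt_cases i (fst (nth u t d0))) as [Hle|Hgt].
    + destruct (IHu ltac:(lia) i Hle) as [u' [? ?]]. exists u'; split; [lia|auto].
    + exists (S u); split; [lia|]. revert Hs Hgt Hi.
      destruct (nth u t d0) as [i0 j0]; destruct (nth (S u) t d0) as [i1 j1]. simpl.
      intros [Hi1 _] ? ?. lia.
Qed.

Lemma trav_snd_mono m k t : is_traversal m k t ->
  forall d u, (u + d < length t)%nat -> (snd (nth u t d0) <= snd (nth (u+d) t d0))%nat.
Proof.
  intros [Hne [H0 [Hl Hs]]] d. induction d; intros u Hu.
  - rewrite Nat.add_0_r; lia.
  - specialize (IHd u ltac:(lia)). specialize (Hs (u+d)%nat ltac:(lia)).
    replace (u + S d)%nat with (S (u+d)) by lia.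
    revert IHd Hs.
    destruct (nth (u+d) t d0) as [i0 j0]; destruct (nth (S (u+d)) t d0) as [i1 j1]. simpl.
    intros ? [_ [Hj _]]. lia.
Qed.

Lemma pair_dist_le_cost {M:MetricSpace} (p q : list M) t u : (u < length t)%nat ->
  pair_dist p q (nth u t d0) <= trav_cost p q t.
Proof. intros H. unfold trav_cost. apply fold_Rmax_ge. apply in_map. apply nth_In; auto. Qed.

Definition vals {M:MetricSpace} (p q : list M) : list R :=
  0 :: flat_map (fun x => map (Defs.dist M x) q) p.

Lemma pair_dist_in {M:MetricSpace} (p q : list M) ij : In (pair_dist p q ij) (vals p q).
Proof. unfold pair_dist, vals.
  destruct (nth_error p (fst ij)) as [x|] eqn:E1; [destruct (nth_error q (snd ij)) as [y|] eqn:E2|];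
  try (left; reflexivity).
  right. apply in_flat_map. exists x. split. eapply nth_error_In; eauto.
  apply in_map. eapply nth_error_In; eauto. Qed.

Lemma list_min (V : list R) (P : R -> Prop) : (exists v, In v V /\ P v) ->
  exists v, P v /\ forall w, In w V -> P w -> v <= w.
Proof.
  induction V as [|a V IH]; intros [v [Hv HP]]. destruct Hv.
  destruct (classic (exists v, In v V /\ P v)) as [Hex|Hno].
  - destruct (IH Hex) as [v' [HP' Hm]].
    destruct (classic (P a)) as [Ha|Ha].
    + destruct (Rle_dec a v').
      * exists a. split; auto. intros w [<-|Hw] Hw'. lra. specialize (Hm w Hw Hw'). lra.
      * exists v'. split; auto. intros w [<-|Hw] Hw'. lra. auto.
    + exists v'. split; auto. intros w [<-|Hw] Hw'. contradiction. auto.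
  - destruct Hv as [<-|Hv]; [|exfalso; apply Hno; eauto].
    exists a. split; auto. intros w [<-|Hw] Hw'; [lra| exfalso; apply Hno; eauto].
Qed.

Lemma dF_spec {M:MetricSpace} (p q : list M) : p <> [] -> q <> [] -> is_dF p q (dF p q).
Proof.
  intros Hp Hq. unfold dF. apply epsilon_spec.
  destruct p as [|x p']; [congruence|]. destruct q as [|y q']; [congruence|].
  destruct (trav_exists (length p') (length q')) as [t0 Ht0].
  destruct (list_min (vals (x::p') (y::q')) (fun v => exists t, is_traversal (length (x::p')) (length (y::q')) t /\ trav_cost (x::p') (y::q') t = v)) as [v [[t [Ht Hc]] Hm]].
  - exists (trav_cost (x::p') (y::q') t0). split.
    + apply fold_Rmax_in. left; reflexivity. intros z Hz. apply in_map_iff in Hz.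
      destruct Hz as [ij [<- _]]. apply pair_dist_in.
    + exists t0; split; [exact Ht0|reflexivity].
  - exists v. split. exists t; auto. intros t' Ht'. apply Hm.
    apply fold_Rmax_in. left; reflexivity. intros z Hz. apply in_map_iff in Hz.
    destruct Hz as [ij [<- _]]. apply pair_dist_in. exists t'; auto.
Qed.

Lemma dF_le_cost {M:MetricSpace} (p q : list M) t : p <> [] -> q <> [] ->
  is_traversal (length p) (length q) t -> dF p q <= trav_cost p q t.
Proof. intros Hp Hq Ht. destruct (dF_spec p q Hp Hq) as [_ H]. auto. Qed.

Lemma dF_nonneg {M:MetricSpace} (p q : list M) : p <> [] -> q <> [] -> 0 <= dF p q.
Proof. intros Hp Hq. destruct (dF_spec p q Hp Hq) as [[t [_ <-]] _]. apply fold_Rmax_nonneg. Qed.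

Definition sw (ij : nat*nat) : nat*nat := (snd ij, fst ij).

Lemma trav_swap m k t : is_traversal m k t -> is_traversal k m (map sw t).
Proof.
  intros [Hne [H0 [Hl Hs]]].
  assert (Hn : forall u, nth u (map sw t) d0 = sw (nth u t d0)) by (intro u; exact (map_nth sw t d0 u)).
  split; [|split;[|split]].
  - destruct t; simpl; congruence.
  - rewrite Hn, H0. reflexivity.
  - rewrite length_map, Hn, Hl. reflexivity.
  - intros u Hu. rewrite length_map in Hu. rewrite !Hn. specialize (Hs u Hu).
    revert Hs.
    destruct (nth u t d0) as [a b]; destruct (nth (S u) t d0) as [c d]. simpl.
    intros [H1 [H2 H3]]. split; auto. split; auto. intro E; apply H3.
    injection E; intros; subst; reflexivity.
Qed.

Lemma cost_swap {M:MetricSpace} (p q : list M) t : trav_cost q p (map sw t) = trav_cost p q t.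
Proof. unfold trav_cost. rewrite map_map. f_equal. apply map_ext. intros [i j].
  unfold pair_dist, sw; simpl. destruct (nth_error p i), (nth_error q j); auto. apply Defs.dist_sym. Qed.

Lemma is_dF_sym {M:MetricSpace} (p q : list M) r : is_dF p q r -> is_dF q p r.
Proof. intros [[t [Ht Hc]] Hm]. split. exists (map sw t). split. apply trav_swap; auto.
  rewrite cost_swap; auto.
  intros t' Ht'. rewrite <- (cost_swap q p t'). apply Hm. apply trav_swap; auto. Qed.

Lemma dF_sym {M:MetricSpace} (p q: list M) : p<>[] -> q<>[] -> dF p q = dF q p.
Proof. intros Hp Hq. pose proof (dF_spec p q Hp Hq) as H1.
  pose proof (is_dF_sym _ _ _ (dF_spec q p Hq Hp)) as H2.
  destruct H1 as [[t1 [Ht1 Hc1]] Hm1]. destruct H2 as [[t2 [Ht2 Hc2]] Hm2].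
  apply Rle_antisym. rewrite <- Hc2. apply Hm1; auto. rewrite <- Hc1; apply Hm2; auto. Qed.

Lemma dF_cover {M:MetricSpace} (p q : list M) : p <> [] -> q <> [] ->
  forall y, In y p -> exists z, In z q /\ Defs.dist M y z <= dF p q.
Proof.
  intros Hp Hq y Hy.
  destruct (dF_spec p q Hp Hq) as [[t [Ht Hc]] _].
  destruct (In_nth_error p y Hy) as [i Hi].
  assert (Hip : (i < length p)%nat) by (apply nth_error_Some; congruence).
  pose proof Ht as [Hne [H0 [Hl Hs]]].
  assert (Hlt : (0 < length t)%nat) by (destruct t; [congruence| simpl; lia]).
  assert (Hi' : (i <= fst (nth (length t - 1) t d0))%nat) by (rewrite Hl; simpl; lia).
  destruct (trav_fst_reach _ _ _ Ht (length t - 1) ltac:(lia) i Hi') as [u [Hu Hf]].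
  pose proof (trav_snd_mono _ _ _ Ht (length t - 1 - u) u ltac:(lia)) as Hsn.
  replace (u + (length t - 1 - u))%nat with (length t - 1)%nat in Hsn by lia.
  rewrite Hl in Hsn. simpl in Hsn.
  assert (Hj : (snd (nth u t d0) < length q)%nat) by (destruct q; [congruence| simpl in *; lia]).
  destruct (nth_error q (snd (nth u t d0))) as [z|] eqn:Ez; [| apply nth_error_None in Ez; lia].
  exists z. split. eapply nth_error_In; eauto.
  rewrite <- Hc. eapply Rle_trans; [|apply (pair_dist_le_cost p q t u); lia].
  unfold pair_dist. rewrite Hf, Hi, Ez. lra.
Qed.

Lemma dF_pointwise {M:MetricSpace} (q Xb : list M) delta : q <> [] -> length Xb = length q -> 0 <= delta ->
  (forall i, (i < length q)%nat -> exists y z, nth_error q i = Some y /\ nth_error Xb i = Some z /\ Defs.dist M z y <= delta) ->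
  dF q Xb <= delta.
Proof.
  intros Hq Hl Hd H.
  destruct q as [|y0 q']; [congruence|].
  assert (Hxb : Xb <> []) by (destruct Xb; simpl in Hl; [discriminate| congruence]).
  eapply Rle_trans. apply (dF_le_cost _ _ (map (fun i => (i,i)) (seq 0 (S (length q'))))); auto.
  - rewrite Hl. apply trav_diag.
  - unfold trav_cost. apply fold_Rmax_le; auto. intros x Hx. apply in_map_iff in Hx.
    destruct Hx as [ij [<- Hij]].
    apply in_map_iff in Hij. destruct Hij as [i [<- Hi]]. apply in_seq in Hi.
    destruct (H i ltac:(simpl; lia)) as [y [z [E1 [E2 Hyz]]]]. unfold pair_dist; simpl.
    rewrite E1, E2. rewrite Defs.dist_sym. auto.
Qed.

Lemma one_step (M:MetricSpace) lam : doubling_cover M lam -> forall (D : list M) rho, 0 < rho ->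
  exists E, (length E <= lam * length D)%nat /\
    forall c y, In c D -> Defs.dist M c y <= rho -> exists e, In e E /\ Defs.dist M e y <= rho/2.
Proof.
  intros Hd D rho Hr. induction D as [|c D IH].
  - exists []. split. simpl; lia. intros c y [].
  - destruct IH as [E [HE HEc]]. destruct (Hd c rho Hr) as [C [HC HCc]].
    exists (C ++ E). split. rewrite length_app; simpl; nia.
    intros c' y [<-|Hc'] Hy.
    + destruct (HCc y Hy) as [e [He He']]. exists e; split; auto. apply in_or_app; auto.
    + destruct (HEc c' y Hc' Hy) as [e [He He']]. exists e; split; auto. apply in_or_app; auto.
Qed.

Lemma cover_list (M:MetricSpace) lam : doubling_cover M lam -> forall n (xs : list M) rho, 0 < rho ->
  exists D, (length D <= length xs * lam ^ n)%nat /\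
    forall x y, In x xs -> Defs.dist M x y <= rho -> exists c, In c D /\ Defs.dist M c y <= rho / 2 ^ n.
Proof.
  intros Hd n. induction n; intros xs rho Hr.
  - exists xs. split. simpl; lia. intros x y Hx Hy. exists x; split; auto. simpl. lra.
  - destruct (IHn xs rho Hr) as [D [HD HDc]].
    assert (Hp : 0 < 2 ^ n) by (apply pow_lt; lra).
    destruct (one_step M lam Hd D (rho / 2^n)) as [E [HE HEc]].
    { apply Rdiv_lt_0_compat; auto. }
    exists E. split. simpl. nia.
    intros x y Hx Hy. destruct (HDc x y Hx Hy) as [c [Hc Hc']].
    destruct (HEc c y Hc Hc') as [e [He He']]. exists e; split; auto. simpl.
    replace (rho / (2 * 2^n)) with (rho / 2^n / 2) by (field; lra). auto.
Qed.

Lemma cover_scales (M:MetricSpace) lam : doubling_cover M lam -> forall n (xs : list M) (rho : nat -> R),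
  (forall i, 0 < rho i) ->
  forall N, exists Q, (length Q <= S N * (length xs * lam ^ n))%nat /\
    forall i x y, (i <= N)%nat -> In x xs -> Defs.dist M x y <= rho i -> exists c, In c Q /\ Defs.dist M c y <= rho i / 2 ^ n.
Proof.
  intros Hd n xs rho Hr N. induction N.
  - destruct (cover_list M lam Hd n xs (rho 0%nat) (Hr 0%nat)) as [D [HD HDc]]. exists D.
    split. lia. intros i x y Hi. replace i with 0%nat by lia. intros Hx Hy; exact (HDc x y Hx Hy).
  - destruct IHN as [Q [HQ HQc]].
    destruct (cover_list M lam Hd n xs (rho (S N)) (Hr _)) as [D [HD HDc]].
    exists (D ++ Q). split. rewrite length_app. set (X := (length xs * lam ^ n)%nat) in *. nia.
    intros i x y Hi Hx Hy. destruct (Nat.eq_dec i (S N)) as [->|Hne].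
    + destruct (HDc x y Hx Hy) as [c [Hc Hc']]. exists c; split; auto. apply in_or_app; auto.
    + destruct (HQc i x y ltac:(lia) Hx Hy) as [c [Hc Hc']]. exists c; split; auto. apply in_or_app; auto.
Qed.

Lemma dedup_exists {A : Type} (l : list A) : exists l', NoDup l' /\ (forall x, In x l -> In x l') /\
  (forall x, In x l' -> In x l) /\ (length l' <= length l)%nat.
Proof.
  induction l as [|a l [l' [H1 [H2 [H3 H4]]]]].
  - exists []. split; [constructor|]. split; [intros x []|]. split; [intros x []| simpl; lia].
  - destruct (classic (In a l')).
    + exists l'. split; auto. split. intros x [<-|Hx]; auto. split. intros x Hx; right; auto. simpl; lia.
    + exists (a :: l'). split. constructor; auto. split. intros x [<-|Hx]; [left|right]; auto.
      split. intros x [<-|Hx]; [left|right]; auto. simpl; lia.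
Qed.

Fixpoint all_seqs {A : Type} (P : list A) (k : nat) : list (list A) :=
  match k with O => [[]] | S k' => flat_map (fun x => map (cons x) (all_seqs P k')) P end.

Lemma flat_map_length_const {A B} (f : A -> list B) c l : (forall x, length (f x) = c) ->
  length (flat_map f l) = (length l * c)%nat.
Proof. intros H. induction l; simpl; auto. rewrite length_app, H, IHl. reflexivity. Qed.

Lemma all_seqs_length {A} (P : list A) k : length (all_seqs P k) = (length P ^ k)%nat.
Proof. induction k; simpl; auto. rewrite (flat_map_length_const _ (length P ^ k)). reflexivity.
  intros x; rewrite length_map; auto. Qed.

Lemma all_seqs_len {A} (P : list A) k Y : In Y (all_seqs P k) -> length Y = k.
Proof. revert Y; induction k; simpl; intros Y H. destruct H as [<-|[]]; auto.
  apply in_flat_map in H. destruct H as [x [_ Hx]]. apply in_map_iff in Hx.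
  destruct Hx as [Y' [<- HY']]. simpl; f_equal; auto. Qed.

Lemma all_seqs_in {A} (P : list A) Y : (forall z, In z Y -> In z P) -> In Y (all_seqs P (length Y)).
Proof. induction Y as [|a Y IH]; simpl; intros H. left; auto. apply in_flat_map. exists a.
  split. apply H; auto. apply in_map. apply IH. intros; apply H; auto. Qed.

Lemma choose_pts {M:MetricSpace} (P : list M) delta (q : list M) :
  (forall y, In y q -> exists p, In p P /\ Defs.dist M p y <= delta) ->
  exists Xb, length Xb = length q /\ (forall z, In z Xb -> In z P) /\
   forall i, (i < length q)%nat -> exists y z, nth_error q i = Some y /\ nth_error Xb i = Some z /\ Defs.dist M z y <= delta.
Proof.
  induction q as [|y q IH]; intros H.
  - exists []. split; auto. split. intros z []. intros i Hi; simpl in Hi; lia.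
  - destruct (H y (or_introl eq_refl)) as [p [Hp Hpd]].
    destruct IH as [Xb [HL [HP HD]]]. intros y' Hy'; apply H; right; auto.
    exists (p :: Xb). split. simpl; auto. split. intros z [<-|Hz]; auto.
    intros [|i] Hi. exists y, p; repeat split; auto. simpl in Hi.
    destruct (HD i ltac:(lia)) as [y' [z [E1 [E2 E3]]]]. exists y', z; simpl; auto.
Qed.

Lemma ln2_pos : 0 < ln 2.
Proof. rewrite <- ln_1; apply ln_increasing; lra. Qed.

Lemma pow2_bound (x : R) : 1 < x -> exists n : nat, x <= 2 ^ n /\ INR n <= log2 x + 1.
Proof.
  intros Hx. pose proof ln2_pos as Hl2.
  assert (Hlx : 0 < ln x) by (rewrite <- ln_1; apply ln_increasing; lra).
  assert (Hl : 0 < log2 x) by (unfold log2; apply Rdiv_lt_0_compat; auto).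
  destruct (archimed (log2 x)) as [H1 H2].
  assert (Hup : (0 < up (log2 x))%Z) by (apply lt_IZR; simpl; lra).
  exists (Z.to_nat (up (log2 x))).
  assert (HI : INR (Z.to_nat (up (log2 x))) = IZR (up (log2 x))) by (rewrite INR_IZR_INZ, Z2Nat.id; [reflexivity| lia]).
  split.
  - apply Rle_trans with (exp (ln x)); [rewrite exp_ln; lra|]. rewrite <- (Rpower_pow _ 2) by lra. unfold Rpower. apply exp_le'.
    rewrite HI. unfold log2 in H1.
    assert (ln x / ln 2 * ln 2 <= IZR (up (ln x / ln 2)) * ln 2) by (apply Rmult_le_compat_r; lra).
    replace (ln x / ln 2 * ln 2) with (ln x) in H by (field; lra). unfold log2. lra.
  - rewrite HI. lra.
Qed.

Lemma lam_pow_bound (lam : nat) (n : nat) (A B : R) : (1 <= lam)%nat -> 1 < B -> 0 < A -> 2 * B <= 6 * A ->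
  INR n <= log2 B + 1 ->
  INR lam ^ n <= Rpower 6 (log2 (INR lam)) * Rpower A (log2 (INR lam)).
Proof.
  intros Hl HB HA HBA Hn.
  assert (Hl' : 1 <= INR lam) by (apply (le_INR 1) in Hl; simpl in Hl; lra).
  pose proof ln2_pos as Hln2.
  assert (Hla : 0 <= ln (INR lam)) by (rewrite <- ln_1; apply ln_le'; lra).
  rewrite <- Rpower_pow by lra. unfold Rpower. rewrite <- exp_plus.
  apply exp_le'.
  assert (E1 : INR n * ln (INR lam) <= (log2 B + 1) * ln (INR lam)) by (apply Rmult_le_compat_r; auto).
  assert (E2 : log2 B + 1 = ln (2*B) / ln 2) by (unfold log2; rewrite ln_mult by lra; field; lra).
  assert (E3 : ln (2*B) <= ln 6 + ln A) by (rewrite <- ln_mult by lra; apply ln_le'; lra).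
  assert (E4 : ln (2*B) / ln 2 * ln (INR lam) <= (ln 6 + ln A) / ln 2 * ln (INR lam)).
  { apply Rmult_le_compat_r; auto. unfold Rdiv; apply Rmult_le_compat_r; auto.
    left; apply Rinv_0_lt_compat; auto. }
  rewrite E2 in E1. eapply Rle_trans; [exact E1|]. eapply Rle_trans; [exact E4|].
  right; unfold log2; field; lra.
Qed.

Lemma final_arith (k N L Lam W : R) : 1 <= k -> 1 <= Lam -> Lam <= W -> N <= L + 1 -> 1 < L -> 0 <= N ->
  k + (N + 1) * (k * Lam) <= 4 * k * L * W.
Proof.
  intros. assert (k <= k*Lam) by nra. assert (k*Lam <= k*W) by nra. assert (0 <= k*Lam) by nra.
  assert ((N+2) * (k*Lam) <= (L+3)*(k*W)) by (apply Rmult_le_compat; lra).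
  assert ((L+3)*(k*W) <= 4*L*(k*W)) by nra. nra.
Qed.

Lemma scale_exists (s0 r : R) N : 0 < s0 -> s0 <= r -> r <= 2 ^ N * s0 ->
  exists i, (i <= N)%nat /\ 2 ^ i * s0 <= r /\ r <= 2 ^ S i * s0.
Proof.
  intros Hs. induction N; intros H1 H2.
  - exists 0%nat. simpl in *. split; [lia|]. split; lra.
  - destruct (Rle_dec r (2 ^ N * s0)).
    + destruct (IHN H1 r0) as [i [Hi Hr]]. exists i; split; [lia|auto].
    + exists N. split; [lia|]. split; [lra|auto].
Qed.

Theorem mainTheorem5 :
  forall lam : nat,
  exists c : R, 0 < c /\
  forall (M : MetricSpace), doubling_constant M lam ->
  forall (alpha eps : R) (k m : nat) (X Xk : list M),
    2 <= alpha -> 0 < eps < 1 -> (1 <= k)%nat -> (1 <= m)%nat ->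
    length X = m ->
    approx_simplification alpha k X Xk ->
    exists C : list (list M),
      NoDup C /\
      (forall Y, In Y C -> length Y = k) /\
      INR (length C) <=
        (c * INR k * log2 (alpha / eps) *
           Rpower (alpha / eps) (log2 (INR lam))) ^ k /\
      forall q : list M, length q = k ->
        eps * dF X Xk <= dF q X <= / eps * dF X Xk ->
        exists Xb, In Xb C /\ dF q Xb <= eps * dF q X.
Proof.
  intros lam.
  exists (4 * Rpower 6 (log2 (INR lam))). split.
  { apply Rmult_lt_0_compat. lra. unfold Rpower; apply exp_pos. }
  intros M [Hdc _] alpha eps k m X Xk Halpha Heps Hk Hm HX [HXk Happ].
  assert (HXne : X <> []) by (destruct X; simpl in HX; [lia|congruence]).
  assert (HXkne : Xk <> []) by (destruct Xk; simpl in HXk; [lia|congruence]).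
  assert (Hlam : (1 <= lam)%nat).
  { destruct X as [|x0 X']; [congruence|]. destruct (Hdc x0 1 ltac:(lra)) as [C [HC HCc]].
    destruct (HCc x0 ltac:(rewrite Defs.dist_refl; lra)) as [c [Hc _]].
    destruct C; [destruct Hc| simpl in HC; lia]. }
  set (R := dF X Xk).
  assert (HR0 : 0 <= R) by (apply dF_nonneg; auto).
  set (A := alpha / eps).
  assert (HAe : A * eps = alpha) by (unfold A; field; lra).
  assert (HA : 2 < A) by nra.
  set (B := 2 * (1 + alpha) / eps).
  assert (HBe : B * eps = 2 * (1 + alpha)) by (unfold B; field; lra).
  assert (HB : 1 < B) by nra.
  assert (HBA : 2 * B <= 6 * A) by nra.
  destruct (pow2_bound A) as [N [HN1 HN2]]; [lra|].
  destruct (pow2_bound B) as [n [Hn1 Hn2]]; [lra|].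
  assert (Hclaim : forall q, length q = k -> R <= alpha * dF q X /\
     forall y, In y q -> exists x, In x Xk /\ Defs.dist M x y <= dF q X + R).
  { intros q Hq. assert (Hqne : q <> []) by (destruct q; simpl in Hq; [lia|congruence]).
    split.
    - rewrite <- (dF_sym X q) by auto. apply Happ; auto.
    - intros y Hy. destruct (dF_cover q X Hqne HXne y Hy) as [z [Hz Hyz]].
      destruct (dF_cover X Xk HXne HXkne z Hz) as [x [Hx Hzx]].
      exists x. split; auto. eapply Rle_trans; [apply (Defs.dist_tri M x z y)|].
      rewrite (Defs.dist_sym M x z), (Defs.dist_sym M z y). fold R in Hzx. lra. }
  assert (HP : exists P : list M, (length P <= k + S N * (k * lam ^ n))%nat /\
     forall q, length q = k -> eps * R <= dF q X <= / eps * R ->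
     forall y, In y q -> exists p, In p P /\ Defs.dist M p y <= eps * dF q X).
  { destruct (Rle_lt_or_eq_dec _ _ HR0) as [HRpos|HRz].
    - set (s0 := R / alpha).
      assert (Hs0 : 0 < s0) by (unfold s0; apply Rdiv_lt_0_compat; lra).
      set (rho := fun i : nat => (1 + alpha) * (2 ^ S i * s0)).
      assert (Hrho : forall i, 0 < rho i).
      { intros i. unfold rho. apply Rmult_lt_0_compat; [lra|]. apply Rmult_lt_0_compat; auto. apply pow_lt; lra. }
      destruct (cover_scales M lam Hdc n Xk rho Hrho N) as [Q [HQ HQc]].
      exists (Xk ++ Q). split. rewrite length_app, HXk. rewrite HXk in HQ. lia.
      intros q Hq [Hr1 Hr2] y Hy.
      destruct (Hclaim q Hq) as [HRr Hcov].
      set (r := dF q X) in *.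
      assert (Hs0r : s0 <= r) by (unfold s0; apply div_le; lra).
      assert (Hr2' : r <= 2 ^ N * s0).
      { eapply Rle_trans; [exact Hr2|]. replace (/ eps * R) with (A * s0) by (unfold A, s0; field; lra).
        apply Rmult_le_compat_r; lra. }
      destruct (scale_exists s0 r N Hs0 Hs0r Hr2') as [i [Hi [Hi1 Hi2]]].
      destruct (Hcov y Hy) as [x [Hx Hxy]].
      assert (Hxy' : Defs.dist M x y <= rho i).
      { unfold rho. eapply Rle_trans; [exact Hxy|].
        apply Rle_trans with ((1 + alpha) * r); [lra|]. apply Rmult_le_compat_l; lra. }
      destruct (HQc i x y Hi Hx Hxy') as [c [Hc Hcy]].
      exists c. split; [apply in_or_app; auto|]. eapply Rle_trans; [exact Hcy|].
      assert (Hp : 0 < 2 ^ n) by (apply pow_lt; lra).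
      assert (HT : 0 < 2 ^ i * s0) by (apply Rmult_lt_0_compat; auto; apply pow_lt; lra).
      apply Rle_trans with (eps * (2 ^ i * s0)); [|apply Rmult_le_compat_l; lra].
      apply div_le; auto. unfold rho. simpl (2 ^ S i).
      assert (2 * (1 + alpha) <= eps * 2 ^ n) by nra.
      set (T := 2 ^ i * s0) in *. replace ((1 + alpha) * (2 * 2 ^ i * s0)) with ((1 + alpha) * 2 * T) by (unfold T; ring).
      nra.
    - exists Xk. split. rewrite HXk. lia.
      intros q Hq [Hr1 Hr2] y Hy.
      destruct (Hclaim q Hq) as [HRr Hcov].
      assert (Hqne : q <> []) by (destruct q; simpl in Hq; [lia|congruence]).
      pose proof (dF_nonneg q X Hqne HXne).
      rewrite <- HRz in Hr2. rewrite Rmult_0_r in Hr2.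
      destruct (Hcov y Hy) as [x [Hx Hxy]]. exists x. split; auto. rewrite <- HRz in Hxy. nra. }
  destruct HP as [P [HPlen HPcov]].
  destruct (dedup_exists (all_seqs P k)) as [C [HCnd [HC1 [HC2 HClen]]]].
  exists C. split; auto. split.
  { intros Y HY; apply (all_seqs_len P k); auto. }
  split.
  - rewrite all_seqs_length in HClen.
    apply Rle_trans with (INR (length P) ^ k).
    { rewrite <- pow_INR. apply le_INR; auto. }
    apply pow_incr. split; [apply pos_INR|].
    apply le_INR in HPlen. rewrite plus_INR, !mult_INR, pow_INR, S_INR in HPlen.
    eapply Rle_trans; [exact HPlen|].
    assert (HL : 1 < log2 A).
    { unfold log2. pose proof ln2_pos. assert (ln 2 < ln A) by (apply ln_increasing; lra).
      apply (Rmult_lt_reg_r (ln 2)); auto. unfold Rdiv; rewrite Rmult_assoc, Rinv_l by lra. lra. }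
    assert (Hlam1 : 1 <= INR lam ^ n).
    { rewrite <- pow_INR. apply (le_INR 1). apply Nat.pow_le_mono_l with (c := n) in Hlam.
      rewrite Nat.pow_1_l in Hlam. auto. }
    pose proof (lam_pow_bound lam n A B Hlam HB ltac:(lra) HBA Hn2) as HW.
    assert (Hk1 : 1 <= INR k) by (apply (le_INR 1) in Hk; simpl in Hk; lra).
    pose proof (final_arith (INR k) (INR N) (log2 A) (INR lam ^ n) _ Hk1 Hlam1 HW HN2 HL (pos_INR N)) as F.
    replace (4 * Rpower 6 (log2 (INR lam)) * INR k * log2 A * Rpower A (log2 (INR lam)))
      with (4 * INR k * log2 A * (Rpower 6 (log2 (INR lam)) * Rpower A (log2 (INR lam)))) by ring.
    lra.
  - intros q Hq Hr.
    assert (Hqne : q <> []) by (destruct q; simpl in Hq; [lia|congruence]).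
    destruct (choose_pts P (eps * dF q X) q (HPcov q Hq Hr)) as [Xb [HL [HXbP HD]]].
    exists Xb. split.
    + apply HC1. rewrite <- Hq, <- HL. apply all_seqs_in; auto.
    + apply dF_pointwise; auto. pose proof (dF_nonneg q X Hqne HXne). nra.
Qed.
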